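(* Let $d\ge1$, $U_{\max}>0$, $\tau>0$, $\beta>0$, $\eta>0$, $\lambda_{\mathrm{wd}}\ge0$, $y^*_{\mathrm{target}}\in\mathbb{R}^d$, and let $U(y)=U_{\max}\exp(-\tau\|y-y^*_{\mathrm{target}}\|^2)$. Given a nonzero $w_0\in\mathbb{R}^d$, define the iteration for $t\ge0$: \[ y_t=\arg\max_{y\in\mathbb{R}^d}\Big(w_t^\top y-\tfrac{\beta}{2}\|y\|^2\Big),\qquad w_{t+1}=(1-\lambda_{\mathrm{wd}})w_t-\eta\big(w_t^\top y_t-U(y_t)\big)y_t. \] Let $\hat u=w_0/\|w_0\|$, $C=\hat u^\top y^*_{\mathrm{target}}$, $D^2=\|y^*_{\mathrm{target}}\|^2-C^2$, $\bar U_{\max}=U_{\max}\exp(-\tau D^2)$, $F(r)=\frac{\eta}{\beta}U(r\hat u)-\eta r^2-\lambda_{\mathrm{wd}}$ and $f(r)=r(1+F(r))$. Assume: (A1) $F(r)>0$ for all $r\in[0,C]$; (A2) $\lambda_{\mathrm{wd}}<1$ and $\eta$ is such that $f'(r)>0$ for all $r\in[0,r^*]$, where $r^*$ is the unique positive root of $F$. Then: (i) $y_t\in\mathrm{span}(w_0)$ for all $t\ge0$; (ii) writing $y_t=r_t\hat u$, with $r_0=\|w_0\|/\beta<r^*$, the sequence $(r_t)$ converges to $r^*$; (iii) the point $y^*=r^*\hat u$ satisfies $r^*>C$ and $U(y^* )<\bar U_{\max}\le U_{\max}$, with $\bar U_{\max}<U_{\max}$ whenever $D>0$, i.e. whenever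 $y^*_{\mathrm{target}}\notin\mathrm{span}(w_0)$.
   Context: This models standard iterative RLHF with a linear reward model $r_w(y)=w^\top y$, an $L_2$ action cost $\frac{\beta}{2}\|y\|^2$ for the policy, and reward-model updates by one step of gradient descent on the squared error $\frac12(w^\top y_t-U(y_t))^2$ with learning rate $\eta$ and weight decay $\lambda_{\mathrm{wd}}$. *)

(* Defs.v *)
From HB Require Import structures.
From mathcomp Require Import all_boot all_order all_algebra.
From mathcomp Require Import all_classical all_reals all_analysis.
Set Implicit Arguments. Unset Strict Implicit. Unset Printing Implicit Defensive.
Import Order.TTheory GRing.Theory Num.Theory.
Import numFieldNormedType.Exports.
Local Open Scope ring_scope.

Definition dotv (R : realType) (d : nat) (u v : 'rV[R]_d) : R :=
  \sum_(i < d) u 0 i * v 0 i.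

Definition sqnorm (R : realType) (d : nat) (v : 'rV[R]_d) : R := dotv v v.
Definition enorm (R : realType) (d : nat) (v : 'rV[R]_d) : R := Num.sqrt (sqnorm v).

Definition util (R : realType) (d : nat) (Umax tau : R) (ytar y : 'rV[R]_d) : R :=
  Umax * expR (- (tau * sqnorm (y - ytar))).

Definition pobj (R : realType) (d : nat) (beta : R) (w y : 'rV[R]_d) : R :=
  dotv w y - beta / 2 * sqnorm y.

Definition rlhf_iter (R : realType) (d : nat) (Umax tau beta eta lwd : R)
    (ytar w0 : 'rV[R]_d) (w y : nat -> 'rV[R]_d) : Prop :=
  [/\ w 0%N = w0,
      (forall t z, pobj beta (w t) z <= pobj beta (w t) (y t)) &
      (forall t, w t.+1 = (1 - lwd) *: w t
                          - (eta * (dotv (w t) (y t) - util Umax tau ytar (y t))) *: y t)].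

Definition uhat (R : realType) (d : nat) (w0 : 'rV[R]_d) : 'rV[R]_d :=
  (enorm w0)^-1 *: w0.

Definition Ffun (R : realType) (d : nat) (Umax tau beta eta lwd : R)
    (ytar w0 : 'rV[R]_d) (r : R) : R :=
  eta / beta * util Umax tau ytar (r *: uhat w0) - eta * r ^+ 2 - lwd.

Definition ffun (R : realType) (d : nat) (Umax tau beta eta lwd : R)
    (ytar w0 : 'rV[R]_d) (r : R) : R :=
  r * (1 + Ffun Umax tau beta eta lwd ytar w0 r).

(* Main.v *)
Require Import Defs.
From HB Require Import structures.
From mathcomp Require Import all_boot all_order all_algebra.
From mathcomp Require Import all_classical all_reals all_analysis.
From mathcomp Require Import ring lra.
Import Order.TTheory GRing.Theory Num.Theory.
Import numFieldNormedType.Exports.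
Local Open Scope classical_set_scope.
Local Open Scope ring_scope.

Set Implicit Arguments.
Section Vec.
Context {R : realType} {d : nat}.
Implicit Types (u v w : 'rV[R]_d).

Lemma dotvC u v : dotv u v = dotv v u.
Proof. by apply: eq_bigr => i _; rewrite mulrC. Qed.
Lemma dotvDl u v w : dotv (u + v) w = dotv u w + dotv v w.
Proof. by rewrite /dotv -big_split; apply: eq_bigr => i _; rewrite mxE mulrDl. Qed.
Lemma dotvZl a u w : dotv (a *: u) w = a * dotv u w.
Proof. by rewrite /dotv mulr_sumr; apply: eq_bigr => i _; rewrite mxE mulrA. Qed.
Lemma dotvNl u w : dotv (- u) w = - dotv u w.
Proof. by rewrite -scaleN1r dotvZl mulN1r. Qed.
Lemma dotvBl u v w : dotv (u - v) w = dotv u w - dotv v w.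
Proof. by rewrite dotvDl dotvNl. Qed.
Lemma dotvDr u v w : dotv w (u + v) = dotv w u + dotv w v.
Proof. by rewrite dotvC dotvDl !(dotvC w). Qed.
Lemma dotvZr a u w : dotv w (a *: u) = a * dotv w u.
Proof. by rewrite dotvC dotvZl dotvC. Qed.
Lemma dotvBr u v w : dotv w (u - v) = dotv w u - dotv w v.
Proof. by rewrite dotvC dotvBl !(dotvC w). Qed.
Lemma sqnorm_ge0 v : 0 <= sqnorm v.
Proof. by apply: sumr_ge0 => i _; rewrite -expr2; exact: sqr_ge0. Qed.
Lemma sqnorm_eq0 v : sqnorm v = 0 -> v = 0.
Proof.
move=> /eqP; rewrite /sqnorm /dotv psumr_eq0; last by move=> i _; rewrite -expr2; exact: sqr_ge0.
move=> /allP H; apply/rowP => i; rewrite mxE.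
have := H i (mem_index_enum i); rewrite implyTb mulf_eq0 orbb.
by move/eqP.
Qed.
Lemma sqnormZ a v : sqnorm (a *: v) = a ^+ 2 * sqnorm v.
Proof. by rewrite /sqnorm dotvZl dotvZr mulrA expr2. Qed.
Lemma sqnorm0 : sqnorm (0 : 'rV[R]_d) = 0.
Proof. by rewrite -(scale0r (0 : 'rV[R]_d)) sqnormZ expr2 !mul0r. Qed.

Lemma enorm_gt0 v : v != 0 -> 0 < enorm v.
Proof.
move=> v0; rewrite /enorm sqrtr_gt0 lt_neqAle sqnorm_ge0 andbT eq_sym.
by apply/eqP => /sqnorm_eq0 /eqP; rewrite (negbTE v0).
Qed.
Lemma uhat_norm v : v != 0 -> sqnorm (uhat v) = 1.
Proof.
move=> v0; rewrite /uhat sqnormZ exprVn.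
have := enorm_gt0 v v0; rewrite /enorm => h.
rewrite sqr_sqrtr ?sqnorm_ge0 // mulVf //.
by apply/eqP => e; move: h; rewrite e sqrtr0 ltxx.
Qed.
Lemma w0_uhat v : v != 0 -> v = enorm v *: uhat v.
Proof.
move=> v0; rewrite /uhat scalerA mulfV ?scale1r //.
by have := enorm_gt0 v v0; rewrite lt0r => /andP[].
Qed.
Lemma sqnorm_lin v (r : R) w : sqnorm v = 1 ->
  sqnorm (r *: v - w) = r ^+ 2 - 2 * r * dotv v w + sqnorm w.
Proof.
move=> h; rewrite /sqnorm dotvBl !dotvBr !dotvZl !dotvZr.
rewrite -/(sqnorm v) h (dotvC w v); ring.
Qed.
End Vec.
Unset Implicit Arguments.

Theorem proposition4 (R : realType) (d : nat) (Umax tau beta eta lwd : R)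
    (ytar w0 : 'rV[R]_d) (w y : nat -> 'rV[R]_d) (rstar : R) :
  (1 <= d)%N -> 0 < Umax -> 0 < tau -> 0 < beta -> 0 < eta -> 0 <= lwd ->
  w0 != 0 ->
  rlhf_iter Umax tau beta eta lwd ytar w0 w y ->
  (* r* is the unique positive root of F *)
  0 < rstar -> Ffun Umax tau beta eta lwd ytar w0 rstar = 0 ->
  (forall r, 0 < r -> Ffun Umax tau beta eta lwd ytar w0 r = 0 -> r = rstar) ->
  (* (A1) *)
  (forall r, 0 <= r <= dotv (uhat w0) ytar ->
     0 < Ffun Umax tau beta eta lwd ytar w0 r) ->
  (* (A2) *)
  lwd < 1 ->
  (forall r, 0 <= r <= rstar ->
     0 < derive1 (ffun Umax tau beta eta lwd ytar w0) r) ->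
  (* r_0 = ||w0|| / beta < r* *)
  enorm w0 / beta < rstar ->
  let C := dotv (uhat w0) ytar in
  let D2 := sqnorm ytar - C ^+ 2 in
  let Ubar := Umax * expR (- (tau * D2)) in
  (* (i) *)
  (forall t, exists c : R, y t = c *: w0) /\
  (* (ii) *)
  (exists r : nat -> R,
     (forall t, y t = r t *: uhat w0) /\ r 0%N = enorm w0 / beta /\
     r @ \oo --> rstar) /\
  (* (iii) *)
  (C < rstar /\
   util Umax tau ytar (rstar *: uhat w0) < Ubar /\ Ubar <= Umax /\
   (0 < D2 -> Ubar < Umax) /\
   (0 < D2 <-> ~ (exists c : R, ytar = c *: w0))).
Proof.
move=> d1 Um0 tau0 b0 e0 l0 w00 [Hw0 Hmax Hw] rs0 Frs Funiq A1 l1 A2 r0lt.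
have u1 : sqnorm (uhat w0) = 1 by exact: uhat_norm.
set u := uhat w0 in u1 A1 *.
set S := sqnorm ytar.
move=> C D2 Ubar.
have Uform r : util Umax tau ytar (r *: u) =
    Umax * expR (- (tau * (r ^+ 2 - 2 * r * C + S))).
  by rewrite /util sqnorm_lin.
have Fform r : Ffun Umax tau beta eta lwd ytar w0 r =
    eta / beta * (Umax * expR (- (tau * (r ^+ 2 - 2 * r * C + S))))
      - eta * r ^+ 2 - lwd.
  by rewrite /Ffun -/u Uform.
have bn0 : beta != 0 by rewrite gt_eqF.
have Yeq t : y t = beta^-1 *: w t.
  have wz : w t = beta *: (beta^-1 *: w t) by rewrite scalerA mulfV ?scale1r.
  move: (Hmax t (beta^-1 *: w t)) wz; move: (beta^-1 *: w t) => z0.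
  move=> + wz; rewrite wz /pobj !dotvZl.
  move: (y t) => yy.
  have hsq := sqnorm_ge0 (yy - z0).
  have E : sqnorm (yy - z0) = sqnorm yy - 2 * dotv z0 yy + sqnorm z0.
    rewrite /sqnorm dotvBl !dotvBr (dotvC yy z0); ring.
  move=> H.
  have H0 : sqnorm (yy - z0) <= 0.
    rewrite E.
    have : 0 <= beta * (dotv z0 yy - 1 / 2 * sqnorm yy - 1 / 2 * sqnorm z0).
      rewrite /sqnorm in H *; lra.
    rewrite pmulr_rge0 // => h; lra.
  have /sqnorm_eq0 /eqP : sqnorm (yy - z0) = 0 by apply/eqP; rewrite eq_le H0 hsq.
  by rewrite subr_eq0 => /eqP.
pose ff := ffun Umax tau beta eta lwd ytar w0.
pose r0 := enorm w0 / beta.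
pose rs t := iter t ff r0.
have en0 : 0 < enorm w0 by exact: (enorm_gt0 w0 w00).
have Yr t : y t = rs t *: u.
  elim: t => [|t IH].
    rewrite Yeq Hw0 {1}(w0_uhat w0 w00) -/u scalerA /rs /= /r0 mulrC //.
  have Wt : w t = (beta * rs t) *: u.
    by rewrite -scalerA -IH Yeq scalerA mulfV ?scale1r.
  rewrite Yeq Hw IH Wt /rs iterS -/(rs t) /ff /ffun /Ffun -/u.
  clearbody u.
  rewrite dotvZl dotvZr -/(sqnorm u) u1 mulr1 !scalerA -scalerBl scalerA.
  congr (_ *: _); move: (util Umax tau ytar (rs t *: u)) => UU; move: (rs t) => q; field; exact: bn0.
have Fpos r : 0 <= r < rstar -> 0 < Ffun Umax tau beta eta lwd ytar w0 r.
  move=> /andP[r0' rlt]; case: (lerP r C) => rC.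
    by apply: A1; rewrite r0' rC.
  rewrite -Frs !Fform.
  have Ele : expR (- (tau * (rstar ^+ 2 - 2 * rstar * C + S))) <
             expR (- (tau * (r ^+ 2 - 2 * r * C + S))).
    rewrite ltr_expR ltrN2 ltr_pM2l // -subr_gt0.
    have -> : rstar ^+ 2 - 2 * rstar * C + S - (r ^+ 2 - 2 * r * C + S)
      = (rstar - r) * (rstar + r - 2 * C) by ring.
    by apply: mulr_gt0; lra.
  have h1 : eta / beta * (Umax * expR (- (tau * (rstar ^+ 2 - 2 * rstar * C + S)))) <
            eta / beta * (Umax * expR (- (tau * (r ^+ 2 - 2 * r * C + S)))).
    by rewrite ltr_pM2l ?divr_gt0 // ltr_pM2l.
  have h2 : eta * r ^+ 2 < eta * rstar ^+ 2.
    rewrite ltr_pM2l // -subr_gt0.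
    have -> : rstar ^+ 2 - r ^+ 2 = (rstar - r) * (rstar + r) by ring.
    by apply: mulr_gt0; lra.
  lra.
have Crs : C < rstar.
  rewrite ltNge; apply/negP => h.
  by have := A1 rstar; rewrite (ltW rs0) h Frs ltxx => /(_ isT).
pose g (r : R) := r * (1 + eta / beta * (Umax * expR (- (tau * (r ^+ 2 - 2 * r * C + S))))
      - eta * r ^+ 2 - lwd).
have ffE : ff = g.
  by apply/funext => r; rewrite /ff /ffun Fform /g !addrA.
have hder x : derivable ff x 1.
  rewrite ffE.
  pose h := (fun r : R => -(tau*(r^+2 - 2*r*C + S))).
  have h1 : derivable h x 1 by rewrite /h.
  have h2 : derivable (expR \o h) x 1.
    have H := @is_derive1_comp R expR h x _ _ (is_derive_expR _) (derivableP h1).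
    by case: H.
  have -> : g = fun r => r * (1 + eta / beta * (Umax * (expR \o h) r) - eta * r^+2 - lwd) by [].
  by [].
have fmono : {in `[0, rstar] &, {homo ff : x y / x < y}}.
  apply: gtr0_derive1_lt_cc.
  - by move=> x _; exact: hder.
  - move=> x; rewrite in_itv /= => /andP[x0 x1]; apply: A2.
    by rewrite (ltW x0) (ltW x1).
  - by apply: derivable_within_continuous => x _; exact: hder.
have ffrs : ff rstar = rstar by rewrite /ff /ffun Frs addr0 mulr1.
have r0pos : 0 < r0 by rewrite /r0 divr_gt0.
have ffgt x : 0 < x < rstar -> x < ff x.
  move=> /andP[x0 x1]; rewrite /ff /ffun.
  have := Fpos x; rewrite (ltW x0) x1 => /(_ isT) Fx.
  move: Fx; set F := Ffun _ _ _ _ _ _ _ x => Fx.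
  rewrite -subr_gt0; have -> : x * (1 + F) - x = x * F by ring.
  exact: mulr_gt0.
have bnd : forall t, 0 < rs t < rstar.
  elim => [|t /andP[IH1 IH2]]; first by rewrite /rs /= r0pos.
  rewrite /rs iterS -/(rs t).
  have := ffgt (rs t); rewrite IH1 IH2 => /(_ isT) h.
  rewrite (lt_trans IH1 h) /= -{1}ffrs.
  apply: fmono => //; rewrite in_itv /= ?(ltW IH1) ?(ltW IH2) ?(ltW rs0) ?lexx //.
have incr t : rs t <= rs t.+1.
  rewrite /rs iterS -/(rs t); apply: ltW; apply: ffgt; exact: bnd.
have nd : nondecreasing_seq rs by apply/nondecreasing_seqP.
have ub : has_ubound (range rs).
  by exists rstar => _ [t _ <-]; have /andP[_ /ltW] := bnd t.
have cv := nondecreasing_cvgn nd ub.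
set L := sup (range rs) in cv.
have r0L : rs 0%N <= L.
  apply: sup_upper_bound; last by exists 0%N.
  by split => //; exists (rs 0%N), 0%N.
have L0 : 0 < L by apply: lt_le_trans r0L; rewrite /rs /=.
have cvS : (fun n => ff (rs n)) @ \oo --> L.
  by have := cv; rewrite -cvg_shiftS.
have cf : {for L, continuous ff}.
  by apply: differentiable_continuous; apply/derivable1_diffP; exact: hder.
have cvf : (fun n => ff (rs n)) @ \oo --> ff L.
  exact: (cvg_comp _ _ cv cf).
have fL : ff L = L := cvg_unique (@Rhausdorff R) cvf cvS.
have FL : Ffun Umax tau beta eta lwd ytar w0 L = 0.
  move: fL; rewrite /ff /ffun; set F := Ffun _ _ _ _ _ _ _ L => h.
  have : L * F = L * (1 + F) - L by ring.
  rewrite h => E.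
  have /eqP : L * F = 0 by rewrite E; ring.
  by rewrite mulf_eq0 (gt_eqF L0) /= => /eqP.
have LE := Funiq L L0 FL.
have D2ge : 0 <= D2.
  have := sqnorm_ge0 (C *: u - ytar); rewrite sqnorm_lin // /D2 -/C -/S.
  move=> h; lra.
split.
  move=> t; exists (rs t / enorm w0); by rewrite Yr /u /uhat scalerA.
split.
  exists rs; split => //; split => //.
  by rewrite -LE.
split => //.
split.
  rewrite Uform /Ubar ltr_pM2l // ltr_expR ltrN2 ltr_pM2l // /D2.
  have h : 0 < (rstar - C) * (rstar - C) by apply: mulr_gt0; rewrite subr_gt0.
  lra.
split.
  by rewrite /Ubar -[leRHS]mulr1 ler_pM2l // expR_le1 oppr_le0 mulr_ge0 // ltW.
split.
  by move=> h; rewrite /Ubar -[ltRHS]mulr1 ltr_pM2l // expR_lt1 oppr_lt0 mulr_gt0.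
have D2E : D2 = sqnorm (C *: u - ytar).
  rewrite sqnorm_lin // /D2 -/C -/S; ring.
split.
  move=> h [c yc].
  have Cc : C = c * enorm w0.
    by rewrite /C yc {1}(w0_uhat w0 w00) -/u scalerA dotvZr -/(sqnorm u) u1 mulr1.
  move: h; rewrite D2E yc {1}(w0_uhat w0 w00) -/u scalerA -Cc subrr sqnorm0 ltxx.
  by [].
move=> hn; rewrite lt_neqAle D2ge andbT eq_sym; apply/eqP => h0.
apply: hn; exists (C / enorm w0).
have /sqnorm_eq0 /eqP : sqnorm (C *: u - ytar) = 0 by rewrite -D2E.
rewrite subr_eq0 => /eqP <-.
by rewrite /u /uhat scalerA mulrC.
Qed.
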